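(* For $n\ge 4$, the dom-bondage number of the path $P_n$ is $B_{dom}(P_n)=2$ if $n\equiv 2\pmod 4$, and $B_{dom}(P_n)=1$ otherwise.
   Context: A dominated coloring of a graph is a proper coloring in which every color class is dominated by at least one vertex, i.e. for each color class $C$ there is a vertex adjacent to every vertex of $C$; $\chi_{dom}(G)$ is the minimum number of colors in a dominated coloring. The dom-bondage number $B_{dom}(G)$ is the minimum number of edges of $G$ whose removal changes the dominated chromatic number of $G$. *)

(* Defs.v *)
From mathcomp Require Import all_boot.
Set Implicit Arguments. Unset Strict Implicit. Unset Printing Implicit Defensive.

(* A simple graph on a finite vertex type T is given by its adjacency
   relation [adj : rel T] (assumed symmetric and irreflexive). *)

Section DomColoring.
Variable T : finType.

Definition edges (adj : rel T) : {set {set T}} :=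
  [set e : {set T} | [exists x, exists y, adj x y && (e == [set x; y])]].

Definition remove_edges (adj : rel T) (F : {set {set T}}) : rel T :=
  fun x y => adj x y && ([set x; y] \notin F).

Definition no_isolated (adj : rel T) : bool := [forall x, exists y, adj x y].

Definition proper_col (adj : rel T) n (c : {ffun T -> 'I_n}) : bool :=
  [forall x, forall y, adj x y ==> (c x != c y)].

Definition classes_dominated (adj : rel T) n (c : {ffun T -> 'I_n}) : bool :=
  [forall i : 'I_n, [exists x, c x == i] ==>
     [exists v, forall x, (c x == i) ==> adj v x]].

Definition dom_coloring (adj : rel T) n (c : {ffun T -> 'I_n}) : bool :=
  proper_col adj c && classes_dominated adj c.

Definition ncolors n (c : {ffun T -> 'I_n}) : nat := #|[set c x | x : T]|.

(* Colours are taken in 'I_#|T| w.l.o.g. (a colouring never uses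
   more than #|T| colours).  Meaningful when a dominated colouring exists,
   i.e. when the graph has no isolated vertex. *)
Definition chi_dom (adj : rel T) : nat :=
  \big[minn/#|T|]_(c : {ffun T -> 'I_#|T|} | dom_coloring adj c) ncolors c.

(* edge sets whose removal changes chi_dom (keeping chi_dom defined) *)
Definition dom_bondage_set (adj : rel T) (F : {set {set T}}) : Prop :=
  [/\ F \subset edges adj, no_isolated (remove_edges adj F)
    & chi_dom (remove_edges adj F) <> chi_dom adj].

Definition is_dom_bondage (adj : rel T) (b : nat) : Prop :=
  (exists F, dom_bondage_set adj F /\ #|F| = b) /\
  (forall F, dom_bondage_set adj F -> b <= #|F|).

End DomColoring.

Definition path_adj (n : nat) : rel 'I_n :=
  fun i j => (i.+1 == j :> nat) || (j.+1 == i :> nat).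
Arguments path_adj n : clear implicits.

(* Main.v *)
Require Import Defs.
From mathcomp Require Import all_boot zify.
Set Implicit Arguments. Unset Strict Implicit. Unset Printing Implicit Defensive.

Lemma bigminn_le (I : eqType) (r : seq I) (P : pred I) (F : I -> nat) x0 i0 :
  i0 \in r -> P i0 -> \big[minn/x0]_(i <- r | P i) F i <= F i0.
Proof.
elim: r => // a r IH; rewrite inE big_cons => /orP [/eqP <- ->|hr hP].
  exact: geq_minl.
case: (P a); last exact: IH.
by apply: leq_trans (geq_minr _ _) (IH hr hP).
Qed.

Lemma chi_le (T : finType) (adj : rel T) (c : {ffun T -> 'I_#|T|}) :
  dom_coloring adj c -> chi_dom adj <= ncolors c.
Proof. move=> h; rewrite /chi_dom; apply: bigminn_le => //; exact: mem_index_enum. Qed.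

Lemma chi_ge (T : finType) (adj : rel T) B :
  B <= #|T| -> (forall c : {ffun T -> 'I_#|T|}, dom_coloring adj c -> B <= ncolors c) ->
  B <= chi_dom adj.
Proof.
move=> h1 h2; rewrite /chi_dom; apply: (big_ind (fun x => B <= x)) => //.
by move=> x y hx hy; rewrite leq_min hx hy.
Qed.

Definition g (L : nat) := 2 * (L %/ 4) + minn (L %% 4) 2.

Lemma count_bound (p : pred nat) : (forall x, p x -> ~~ p x.+2) ->
  forall L s, count p (iota s L) <= g L.
Proof.
move=> hp L; elim: L {-2}L (leqnn L) => [|M IH] L hL s.
  by move: hL; rewrite leqn0 => /eqP ->.
case: (ltnP L 4) => hL4.
  case: L hL hL4 => [|[|[|[|L]]]] //= _ _; rewrite /g /=; try lia.
  have e0 : p s -> p s.+2 = false by move/hp/negbTE.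
  by case hs: (p s); [rewrite e0 | ]; case: (p s.+1); case: (p s.+2).
have -> : L = 4 + (L - 4) by lia.
rewrite iotaD count_cat.
have h4 : count p (iota s 4) <= 2.
  have e0 : p s -> p s.+2 = false by move/hp/negbTE.
  have e1 : p s.+1 -> p s.+3 = false by move/hp/negbTE.
  rewrite /=; case hs: (p s); [rewrite e0 // | ];
  by case hs1: (p s.+1); [rewrite e1 // | ]; case: (p s.+2); case: (p s.+3).
have := IH (L - 4) ltac:(lia) (s + 4).
rewrite /g; lia.
Qed.

Lemma path_adjE n (u v : 'I_n) : path_adj n u v = (u.+1 == v :> nat) || (v.+1 == u :> nat).
Proof. by []. Qed.

Lemma class2 n (H : rel 'I_n) m (c : {ffun 'I_n -> 'I_m}) :
  (forall u v, H u v -> path_adj n u v) -> dom_coloring H c ->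
  forall u w, c u = c w -> u < w ->
  exists v : 'I_n, [/\ v = u.+1 :> nat, w = u.+2 :> nat, H v u & H v w].
Proof.
move=> hsub /andP [_ /forallP hd] u w huw ltuw.
have := hd (c u); rewrite (_ : [exists x, c x == c u] = true); last first.
  by apply/existsP; exists u.
move=> /= /existsP [v /forallP hv].
have h1 : H v u by have := hv u; rewrite eqxx.
have h2 : H v w by have := hv w; rewrite huw eqxx.
have := hsub _ _ h1; have := hsub _ _ h2; rewrite !path_adjE => a1 a2.
exists v; split => //; lia.
Qed.

Lemma ncolors_lb n (H : rel 'I_n) s m (c : {ffun 'I_n -> 'I_m}) :
  (forall u v, H u v -> path_adj n u v) ->
  (forall u v w : 'I_n, v = u.+1 :> nat -> w = u.+2 :> nat -> w < s -> H v u -> H v w -> False) ->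
  s <= n -> dom_coloring H c -> n - g (n - s) <= ncolors c.
Proof.
move=> hsub hblock hsn hc.
pose p x := [exists u : 'I_n, exists w : 'I_n, [&& u.+2 == x, w == x :> nat & c u == c w]].
pose D := [set w : 'I_n | p w].
have injS : {in ~: D &, injective c}.
  have key : forall u w : 'I_n, w \in ~: D -> c u = c w -> u < w -> False.
    move=> u w; rewrite in_setC inE => hw e lt.
    have [v [_ h _ _]] := class2 hsub hc e lt.
    move/negP: hw; apply; apply/existsP; exists u; apply/existsP; exists w.
    by rewrite e h !eqxx.
  move=> u w hu hw e; case: (ltngtP u w) => h.
  - by case: (key u w hw e h).
  - by case: (key w u hu (esym e) h).
  - exact: ord_inj.
have h1 : #|~: D| <= ncolors c.
  rewrite -(card_in_imset injS) /ncolors; apply: subset_leq_card.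
  by apply/subsetP => y /imsetP [x _ ->]; apply/imsetP; exists x.
have h2 : #|~: D| = n - #|D| by have := cardsC D; rewrite card_ord; lia.
have h3 : #|D| = count p (iota 0 n).
  rewrite -val_enum_ord count_map cardE /enum_mem size_filter /enum_mem count_filter.
  by apply: eq_count => x; rewrite /= inE andbT.
have hp : forall x, p x -> ~~ p x.+2.
  move=> x /existsP [u /existsP [w /and3P [/eqP hu /eqP hw /eqP e]]].
  apply/negP => /existsP [u' /existsP [w' /and3P [/eqP hu' /eqP hw' /eqP e']]].
  have euw : u' = w by apply: ord_inj; lia.
  have e2 : c u = c w' by rewrite e -euw.
  have [v [_ h _ _]] := class2 hsub hc e2 ltac:(lia).
  lia.
have h4 : count p (iota 0 s) = 0.
  rewrite (@eq_in_count _ _ pred0) ?count_pred0 // => x; rewrite mem_iota /= => hx.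
  apply/negbTE/negP => /existsP [u /existsP [w /and3P [/eqP hu /eqP hw /eqP e]]].
  have [v [hv hw' h1' h2']] := class2 hsub hc e ltac:(lia).
  exact: (hblock u v w hv hw' ltac:(lia) h1' h2').
have h5 := count_bound hp (n - s) s.
have h6 : count p (iota 0 n) = count p (iota s (n - s)).
  by rewrite -{1}(subnKC hsn) iotaD count_cat h4.
have h7 : #|D| <= g (n - s) by rewrite h3 h6; exact: h5.
lia.
Qed.

Definition blk x := 2 * (x %/ 4) + x %% 2.
Definition col a x := if x < a then blk x else g a + blk (x - a).
Definition vv n a x :=
  if x < a then (if (x %% 4 < 2) && (x.+1 < a) then x.+1 else x.-1)
  else (if ((x - a) %% 4 < 2) && (x.+1 < n) then x.+1 else x.-1).

Lemma col_lt n a x : a <= n -> x < n -> col a x < g a + g (n - a).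
Proof. move=> ha hx; rewrite /col /g /blk; case: ifP => h; lia. Qed.

Lemma col_adj n a x y : a <= n -> x < n -> y < n -> (x.+1 == y) || (y.+1 == x) -> col a x != col a y.
Proof.
move=> ha hx hy hxy; rewrite /col /g /blk.
case: (ltnP x a) => h1; case: (ltnP y a) => h2; lia.
Qed.

Lemma vv_lt n a x : 4 <= n -> (a = 0 \/ 2 <= a /\ a + 2 <= n) -> x < n -> vv n a x < n.
Proof.
move=> hn ha hx; rewrite /vv.
case: (ltnP x a) => h1; case: ifP => /= h2; lia.
Qed.

Lemma vv_ok n a x y : 4 <= n -> (a = 0 \/ 2 <= a /\ a + 2 <= n) -> x < n -> y < n ->
  col a y = col a x ->
  ((vv n a x).+1 == y) || (y.+1 == vv n a x) /\ ((vv n a x < a) = (y < a)).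
Proof.
move=> hn ha hx hy; rewrite /col /vv /g /blk.
case: (ltnP x a) => h1; case: (ltnP y a) => h2; case: ifP => /= h3 e; split; lia.
Qed.


Lemma chi_ub n (H : rel 'I_n) a : 4 <= n -> (a = 0 \/ 2 <= a /\ a + 2 <= n) ->
  (forall u v, H u v -> path_adj n u v) ->
  (forall u v : 'I_n, path_adj n u v -> (u < a) = (v < a) -> H u v) ->
  chi_dom H <= g a + g (n - a).
Proof.
move=> hn ha hsub hsup.
have han : a <= n by case: ha => [->|]; lia.
have hcol : forall x : 'I_n, col a x < g a + g (n - a) by move=> x; apply: col_lt.
have hM : g a + g (n - a) <= #|'I_n| by rewrite card_ord /g; lia.
pose c := [ffun x : 'I_n => widen_ord hM (Ordinal (hcol x))].
have cE : forall x, val (c x) = col a x by move=> x; rewrite ffunE.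
apply: leq_trans (chi_le (c := c) _) _.
  apply/andP; split.
    apply/forallP => u; apply/forallP => v; apply/implyP => /hsub; rewrite path_adjE => huv.
    apply/eqP => e; have := congr1 val e; rewrite !cE; apply/eqP.
    exact: col_adj han (ltn_ord u) (ltn_ord v) huv.
  apply/forallP => i; apply/implyP => /existsP [x /eqP <-].
  apply/existsP; exists (Ordinal (vv_lt hn ha (ltn_ord x))).
  apply/forallP => y; apply/implyP => /eqP e.
  have := congr1 val e; rewrite !cE => e'.
  have [h1 h2] := vv_ok hn ha (ltn_ord x) (ltn_ord y) e'.
  by apply: hsup.
rewrite /ncolors.
apply: leq_trans (_ : #|[set widen_ord hM j | j : 'I_(g a + g (n - a))]| <= _).
  apply: subset_leq_card; apply/subsetP => z /imsetP [x _ ->].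
  by apply/imsetP; exists (Ordinal (hcol x)) => //; rewrite ffunE.
by apply: leq_trans (leq_imset_card _ _) _; rewrite card_ord.
Qed.


Lemma set2_eqE (T : finType) (u v p q : T) :
  ([set u; v] == [set p; q]) = ((u == p) && (v == q)) || ((u == q) && (v == p)).
Proof.
apply/eqP/idP => [e|].
  have hu : u \in [set p; q] by rewrite -e !inE eqxx.
  have hv : v \in [set p; q] by rewrite -e !inE eqxx orbT.
  have hp : p \in [set u; v] by rewrite e !inE eqxx.
  have hq : q \in [set u; v] by rewrite e !inE eqxx orbT.
  move: hu hv hp hq; rewrite !inE.
  by do 4 (case/orP => /eqP ?); subst; rewrite ?eqxx ?orbT.
by case/orP => /andP [/eqP -> /eqP ->] //; rewrite setUC.
Qed.

Lemma chi_exact n (H : rel 'I_n) a : 4 <= n ->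
  (a = 0 \/ 2 <= a /\ a + 2 <= n /\ n %% 4 = 2) ->
  (forall u v, H u v -> path_adj n u v) ->
  (forall u v : 'I_n, path_adj n u v -> (u < a) = (v < a) -> H u v) ->
  chi_dom H = g n.
Proof.
move=> hn ha hsub hsup; apply/eqP; rewrite eqn_leq; apply/andP; split.
  have h := chi_ub hn (ltac:(case: ha; [left|right]; lia) : a = 0 \/ 2 <= a /\ a + 2 <= n) hsub hsup.
  apply: leq_trans h _; rewrite /g; case: ha => [->|]; lia.
have -> : g n = n - g (n - 2) by rewrite /g; lia.
apply: chi_ge; first by rewrite card_ord leq_subr.
move=> c hc; apply: (ncolors_lb hsub _ _ hc) => //; last by lia.
move=> u v w _ hw hw2; lia.
Qed.

Lemma remE1 n (p q u v : 'I_n) :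
  remove_edges (path_adj n) [set [set p; q]] u v =
  path_adj n u v && ~~ (((u == p :> nat) && (v == q :> nat)) || ((u == q :> nat) && (v == p :> nat))).
Proof. by rewrite /remove_edges in_set1 set2_eqE. Qed.

Lemma single_edge n (p q : 'I_n) : 4 <= n -> n %% 4 = 2 -> q = p.+1 :> nat ->
  no_isolated (remove_edges (path_adj n) [set [set p; q]]) ->
  chi_dom (remove_edges (path_adj n) [set [set p; q]]) = g n.
Proof.
move=> hn hm hpq /forallP hiso.
have hp1 : 1 <= p.
  have /existsP [w] := hiso p; rewrite remE1 path_adjE; lia.
have hq2 : q.+2 <= n.
  have /existsP [w] := hiso q; rewrite remE1 path_adjE; have := ltn_ord w; lia.
apply: (@chi_exact _ _ q) => //.
- right; lia.
- by move=> u v /andP [].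
- move=> u v; rewrite remE1 !path_adjE => h1 h2; lia.
Qed.

Lemma chi_path n : 4 <= n -> chi_dom (path_adj n) = g n.
Proof.
move=> hn; apply: (@chi_exact _ _ 0) => //; by left.
Qed.

Lemma edge_in n (p q : 'I_n) : q = p.+1 :> nat -> [set p; q] \in edges (path_adj n).
Proof.
move=> h; rewrite inE; apply/existsP; exists p; apply/existsP; exists q.
by rewrite eqxx andbT path_adjE h eqxx.
Qed.

Theorem mainTheorem13 (n : nat) (hn : 4 <= n) :
  is_dom_bondage (path_adj n) (if n %% 4 == 2 then 2 else 1).
Proof.
have h1n : 1 < n by lia.
have h2n : 2 < n by lia.
have h3n : 3 < n by lia.
pose i1 := Ordinal h1n. pose i2 := Ordinal h2n. pose i3 := Ordinal h3n.
split.
  case: eqP => hm.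
    have h4n : 4 < n by lia.
    pose i4 := Ordinal h4n.
    pose F := [set [set i1; i2]; [set i3; i4]].
    have remE : forall u v, remove_edges (path_adj n) F u v =
      path_adj n u v && ~~ (((u == 1 :> nat) && (v == 2 :> nat)) || ((u == 2 :> nat) && (v == 1 :> nat))
                           || ((u == 3 :> nat) && (v == 4 :> nat)) || ((u == 4 :> nat) && (v == 3 :> nat))).
      by move=> u v; rewrite /remove_edges !inE !set2_eqE /= !orbA.
    exists F; split; last first.
      rewrite cards2 set2_eqE /=; by [].
    split.
    - apply/subsetP => e; rewrite in_set2 => /orP [] /eqP ->; by apply: edge_in.
    - apply/forallP => z; apply/existsP.
      case: z => [[|[|[|[|[|z]]]]] hz].
      + by exists i1; rewrite remE.
      + by exists (Ordinal (ltn_trans (isT : 0 < 1) h1n)); rewrite remE.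
      + by exists i3; rewrite remE.
      + by exists i2; rewrite remE.
      + have h5 : 5 < n by lia.
        by exists (Ordinal h5); rewrite remE.
      + have h5 : z.+4 < n by lia.
        exists (Ordinal h5); rewrite remE path_adjE /=; lia.
    - have lb : n - g (n - 6) <= chi_dom (remove_edges (path_adj n) F).
        apply: chi_ge; first by rewrite card_ord leq_subr.
        move=> c hc; apply: (ncolors_lb _ _ _ hc).
        + by move=> u v /andP [].
        + move=> u v w hv hw hw6; rewrite !remE !path_adjE; lia.
        + lia.
      rewrite chi_path //; move=> e; rewrite e /g in lb; lia.
  pose F := [set [set i1; i2]].
  exists F; split; last by rewrite cards1.
  split.
  - apply/subsetP => e; rewrite in_set1 => /eqP ->; by apply: edge_in.
  - apply/forallP => z; apply/existsP.
    case: z => [[|[|[|z]]] hz].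
    + by exists i1; rewrite remE1.
    + by exists (Ordinal (ltn_trans (isT : 0 < 1) h1n)); rewrite remE1.
    + by exists i3; rewrite remE1.
    + have h5 : z.+2 < n by lia.
      exists (Ordinal h5); rewrite remE1 path_adjE /=; lia.
  - have lb : n - g (n - 4) <= chi_dom (remove_edges (path_adj n) F).
      apply: chi_ge; first by rewrite card_ord leq_subr.
      move=> c hc; apply: (ncolors_lb _ _ _ hc).
      + by move=> u v /andP [].
      + move=> u v w hv hw hw6; rewrite !remE1 !path_adjE /=; lia.
      + lia.
    rewrite chi_path //; move=> e; rewrite e /g in lb; lia.
move=> F [hsub hiso hneq].
have hF0 : 0 < #|F|.
  rewrite lt0n; apply/negP => /eqP /cards0_eq hF; subst F.
  apply: hneq; rewrite chi_path //; apply: (@chi_exact _ _ 0) => //; first by left.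
    by move=> u v /andP [].
  by move=> u v h _; rewrite /remove_edges h inE.
case: eqP => hm //.
rewrite ltnNge; apply/negP => hF1.
have /cards1P [e hFe] : #|F| == 1 by rewrite eqn_leq hF1 hF0.
subst F.
have : e \in edges (path_adj n) by apply: (subsetP hsub); rewrite inE.
rewrite inE => /existsP [x /existsP [y /andP [hxy /eqP he]]]; subst e.
move: hxy hiso hneq; rewrite path_adjE => /orP [] /eqP hxy.
  move=> hiso; apply; rewrite chi_path // single_edge //; by rewrite hxy.
rewrite setUC => hiso; apply; rewrite chi_path // single_edge //; by rewrite hxy.
Qed.
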